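(* Let $G\subset\mathbb{R}^n$ be a domain and let $f\colon G\to\mathbb{R}^n$ be a discrete $L$-LQ-mapping, meaning that $B(f(x),L^{-1}r)\subset f(B(x,r))\subset B(f(x),Lr)$ holds for all balls $B(x,r)\subset G$. Then $f$ is an $L$-BLD-mapping.
   Context: A map $f$ is $L$-BLD ($L\ge1$) if it is continuous, open and discrete and for every path $\beta$ in its domain $L^{-1}\ell(\beta)\le\ell(f\circ\beta)\le L\ell(\beta)$, where $\ell$ denotes length. *)

(* Defs.v *)
From Stdlib Require Import Reals Lra List Sorting.Sorted.
From Stdlib Require Fin.
Open Scope R_scope.

Definition Rn (n : nat) : Type := Fin.t n -> R.

Fixpoint fsum (n : nat) : (Fin.t n -> R) -> R :=
  match n return (Fin.t n -> R) -> R with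
  | O => fun _ => 0
  | S m => fun g => g Fin.F1 + fsum m (fun i => g (Fin.FS i))
  end.

Definition dist {n : nat} (x y : Rn n) : R :=
  sqrt (fsum n (fun i => (x i - y i) ^ 2)).

Definition ball {n : nat} (x : Rn n) (r : R) : Rn n -> Prop :=
  fun y => dist x y < r.

Definition subset {n : nat} (A B : Rn n -> Prop) : Prop := forall y, A y -> B y.

Definition is_open {n : nat} (U : Rn n -> Prop) : Prop :=
  forall x, U x -> exists r, 0 < r /\ subset (ball x r) U.

Definition is_connected {n : nat} (G : Rn n -> Prop) : Prop :=
  forall U V : Rn n -> Prop, is_open U -> is_open V ->
    (forall x, G x -> U x \/ V x) ->
    (exists x, G x /\ U x) -> (exists x, G x /\ V x) ->
    exists x, G x /\ U x /\ V x.

Definition domain {n : nat} (G : Rn n -> Prop) : Prop :=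
  (exists x, G x) /\ is_open G /\ is_connected G.

Definition image {n : nat} (f : Rn n -> Rn n) (A : Rn n -> Prop) : Rn n -> Prop :=
  fun z => exists y, A y /\ f y = z.

(** Properties of a map f : G -> R^n (represented by a total function whose
    values outside G are irrelevant). *)
Definition continuous_on {n : nat} (G : Rn n -> Prop) (f : Rn n -> Rn n) : Prop :=
  forall x, G x -> forall eps, 0 < eps -> exists delta, 0 < delta /\
    forall y, G y -> dist x y < delta -> dist (f x) (f y) < eps.

Definition open_map_on {n : nat} (G : Rn n -> Prop) (f : Rn n -> Rn n) : Prop :=
  forall U, is_open U -> subset U G -> is_open (image f U).

Definition discrete_on {n : nat} (G : Rn n -> Prop) (f : Rn n -> Rn n) : Prop :=
  forall x, G x -> exists delta, 0 < delta /\
    forall y, G y -> dist x y < delta -> f y = f x -> y = x.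

Definition LQ_on {n : nat} (L : R) (G : Rn n -> Prop) (f : Rn n -> Rn n) : Prop :=
  forall x r, 0 < r -> subset (ball x r) G ->
    subset (ball (f x) (r / L)) (image f (ball x r)) /\
    subset (image f (ball x r)) (ball (f x) (L * r)).

Definition path_in {n : nat} (G : Rn n -> Prop) (beta : R -> Rn n) (a b : R) : Prop :=
  a <= b /\
  (forall t, a <= t <= b -> G (beta t)) /\
  (forall t, a <= t <= b -> forall eps, 0 < eps -> exists delta, 0 < delta /\
     forall s, a <= s <= b -> Rabs (s - t) < delta -> dist (beta t) (beta s) < eps).

Fixpoint poly_sum {n : nat} (beta : R -> Rn n) (ts : list R) : R :=
  match ts with
  | t :: ((s :: _) as rest) => dist (beta t) (beta s) + poly_sum beta rest
  | _ => 0
  end.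

(** [length_le beta a b M] : the length ell(beta) of beta on [a,b]
    (supremum of inscribed polygonal sums over partitions; possibly +oo)
    satisfies ell(beta) <= M. *)
Definition length_le {n : nat} (beta : R -> Rn n) (a b M : R) : Prop :=
  forall ts : list R, Sorted Rle ts -> Forall (fun t => a <= t <= b) ts ->
    poly_sum beta ts <= M.

(** [ell(beta1) <= c * ell(beta2)] in [0,+oo], c > 0: every real upper bound M
    for ell(beta2) gives the upper bound c*M for ell(beta1). *)
Definition length_le_scaled {n : nat} (beta1 beta2 : R -> Rn n) (a b c : R) : Prop :=
  forall M, length_le beta2 a b M -> length_le beta1 a b (c * M).

Definition BLD_on {n : nat} (L : R) (G : Rn n -> Prop) (f : Rn n -> Rn n) : Prop :=
  continuous_on G f /\ open_map_on G f /\ discrete_on G f /\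
  forall beta a b, path_in G beta a b ->
    length_le_scaled beta (fun t => f (beta t)) a b L /\
    length_le_scaled (fun t => f (beta t)) beta a b L.

(* Main.v *)
Require Import Defs.
From Stdlib Require Import Reals Lra List Sorting.Sorted Classical.
Open Scope R_scope.
Local Notation dist := Defs.dist.

Lemma fsum_ext n : forall g h : Fin.t n -> R, (forall i, g i = h i) -> fsum n g = fsum n h.
Proof. induction n; simpl; intros g h H; auto. rewrite H, (IHn _ (fun i => h (Fin.FS i))); auto. Qed.

Lemma fsum_plus n : forall g h : Fin.t n -> R, fsum n (fun i => g i + h i) = fsum n g + fsum n h.
Proof. induction n; simpl; intros g h; [ring|]. rewrite (IHn (fun i => g (Fin.FS i)) (fun i => h (Fin.FS i))). ring. Qed.

Lemma fsum_scal n : forall (c : R) (g : Fin.t n -> R), fsum n (fun i => c * g i) = c * fsum n g.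
Proof. induction n; simpl; intros c g; [ring|]. rewrite (IHn c (fun i => g (Fin.FS i))). ring. Qed.

Lemma fsum_nonneg n : forall g : Fin.t n -> R, (forall i, 0 <= g i) -> 0 <= fsum n g.
Proof. induction n; simpl; intros g H; [lra|]. pose proof (H Fin.F1). pose proof (IHn (fun i => g (Fin.FS i)) (fun i => H _)). lra. Qed.

Lemma fsum_zero n : fsum n (fun _ => 0) = 0.
Proof. induction n; simpl; auto. rewrite IHn; ring. Qed.

Lemma dist_sym {n} (x y : Rn n) : dist x y = dist y x.
Proof. unfold Defs.dist; f_equal; apply fsum_ext; intro; ring. Qed.

Lemma dist_refl {n} (x : Rn n) : dist x x = 0.
Proof. unfold Defs.dist. rewrite (fsum_ext _ _ (fun _ => 0)). rewrite fsum_zero; apply sqrt_0. intro; ring. Qed.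

Lemma dist_nonneg {n} (x y : Rn n) : 0 <= dist x y.
Proof. apply sqrt_pos. Qed.

Lemma quad_disc P Q R0 : 0 <= P -> 0 <= R0 -> (forall l, 0 <= P + 2*l*Q + l*l*R0) -> Q*Q <= P*R0.
Proof.
  intros HP HR H.
  destruct (Rle_lt_or_eq_dec 0 R0 HR) as [Rpos|R0z].
  - pose proof (H (-Q/R0)) as H1.
    replace (P + 2 * (- Q / R0) * Q + - Q / R0 * (- Q / R0) * R0) with ((P*R0 - Q*Q)/R0) in H1 by (field; lra).
    apply Rmult_le_compat_r with (r:=R0) in H1; [|lra].
    unfold Rdiv in H1. rewrite Rmult_assoc, Rinv_l in H1; lra.
  - subst R0. destruct (Req_dec Q 0) as [Qz|Qnz].
    + subst; lra.
    + pose proof (H (-(P+1)/(2*Q))) as H1.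
      replace (P + 2 * (- (P + 1) / (2 * Q)) * Q + - (P + 1) / (2 * Q) * (- (P + 1) / (2 * Q)) * 0) with (-1) in H1 by (field; auto). lra.
Qed.

Lemma cauchy_schwarz n (a b : Fin.t n -> R) :
  fsum n (fun i => a i * b i) <= sqrt (fsum n (fun i => a i ^ 2)) * sqrt (fsum n (fun i => b i ^ 2)).
Proof.
  set (PP := fsum n (fun i => a i ^ 2)). set (QQ := fsum n (fun i => a i * b i)).
  set (RR := fsum n (fun i => b i ^ 2)).
  assert (HP : 0 <= PP) by (apply fsum_nonneg; intro; apply pow2_ge_0).
  assert (HR : 0 <= RR) by (apply fsum_nonneg; intro; apply pow2_ge_0).
  assert (H : QQ*QQ <= PP*RR).
  { apply quad_disc; auto. intro l.
    assert (E : fsum n (fun i => (a i + l * b i)^2) = PP + 2*l*QQ + l*l*RR).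
    { rewrite (fsum_ext _ _ (fun i => a i ^ 2 + ((2*l) * (a i * b i) + (l*l) * (b i ^2)))).
      rewrite fsum_plus, fsum_plus, fsum_scal, fsum_scal. unfold PP, QQ, RR. ring.
      intro; ring. }
    rewrite <- E. apply fsum_nonneg; intro; apply pow2_ge_0. }
  destruct (Rle_or_lt QQ 0).
  - pose proof (sqrt_pos PP); pose proof (sqrt_pos RR). nra.
  - rewrite <- sqrt_mult by auto. rewrite <- (sqrt_square QQ) by lra. apply sqrt_le_1_alt; auto.
Qed.

Lemma dist_triangle {n} (x y z : Rn n) : dist x z <= dist x y + dist y z.
Proof.
  unfold Defs.dist.
  set (a := fun i => x i - y i). set (b := fun i => y i - z i).
  pose proof (cauchy_schwarz n a b) as CS.
  set (sP := sqrt (fsum n (fun i => (x i - y i) ^ 2))).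
  set (sR := sqrt (fsum n (fun i => (y i - z i) ^ 2))).
  assert (HP : 0 <= fsum n (fun i => (x i - y i) ^ 2)) by (apply fsum_nonneg; intro; apply pow2_ge_0).
  assert (HR : 0 <= fsum n (fun i => (y i - z i) ^ 2)) by (apply fsum_nonneg; intro; apply pow2_ge_0).
  assert (E : fsum n (fun i => (x i - z i) ^ 2) =
     fsum n (fun i => (x i - y i) ^ 2) + 2 * fsum n (fun i => a i * b i) + fsum n (fun i => (y i - z i) ^ 2)).
  { rewrite <- fsum_scal, <- fsum_plus, <- fsum_plus. apply fsum_ext; intro; unfold a, b; ring. }
  assert (sP * sP = fsum n (fun i => (x i - y i) ^ 2)) by (apply sqrt_sqrt; auto).
  assert (sR * sR = fsum n (fun i => (y i - z i) ^ 2)) by (apply sqrt_sqrt; auto).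
  assert (0 <= sP) by apply sqrt_pos. assert (0 <= sR) by apply sqrt_pos.
  rewrite <- (sqrt_square (sP + sR)) by lra. apply sqrt_le_1_alt.
  rewrite E. change (fsum n (fun i => a i * b i) <= sP * sR) in CS. nra.
Qed.

Section Chains.
Variable n : nat.
Variables gam eta : R -> Rn n.
Variables a b L : R.

Inductive chain (s : R) : R -> R -> Prop :=
| ch_base : a <= s <= b -> chain s s 0
| ch_cons : forall u v S, chain s u S -> v <= u -> a <= v <= b ->
    chain s v (dist (eta v) (eta u) + S).

Lemma chain_in s t S : chain s t S -> a <= t <= b.
Proof. intros H; destruct H; auto. Qed.

Lemma chain_end s t S : chain s t S -> a <= s <= b.
Proof. induction 1; auto. Qed.

Lemma chain_trans s t S : chain s t S -> forall w S', chain w s S' -> chain w t (S + S').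
Proof.
  induction 1; intros w S' H'.
  - rewrite Rplus_0_l; auto.
  - rewrite Rplus_assoc. apply ch_cons; auto.
Qed.

Lemma chain_list s t S : chain s t S ->
  exists l, Sorted Rle (t :: l) /\ Forall (fun x => a <= x <= b) (t :: l) /\ poly_sum eta (t :: l) = S.
Proof.
  induction 1 as [Hs | u v S Hc [l [Hl1 [Hl2 Hl3]]] Hvu Hv].
  - exists nil; repeat split; auto; try lra.
  - exists (u :: l); repeat split.
    + constructor; auto; constructor; auto.
    + constructor; auto.
    + simpl. simpl in Hl3. rewrite <- Hl3. reflexivity.
Qed.

Lemma chain_le_M M s t S : length_le eta a b M -> chain s t S -> S <= M.
Proof.
  intros HM Hc. destruct (chain_list _ _ _ Hc) as [l [H1 [H2 H3]]].
  rewrite <- H3. apply HM; auto.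
Qed.

Definition Qp t s := exists S, chain s t S /\ dist (gam t) (gam s) <= L * S.

Lemma Qp_extend t u v : Qp t u -> u <= v -> a <= v <= b ->
  dist (gam u) (gam v) <= L * dist (eta u) (eta v) -> Qp t v.
Proof.
  intros [S [Hc Hd]] Huv Hv Hl.
  assert (Hu : a <= u <= b) by (eapply chain_end; eauto).
  exists (S + (dist (eta u) (eta v) + 0)). split.
  - apply chain_trans with u; auto. apply ch_cons; auto. apply ch_base; auto.
  - pose proof (dist_triangle (gam t) (gam u) (gam v)). nra.
Qed.

Hypothesis LC : forall u, a <= u <= b -> exists delta, 0 < delta /\
  forall u', a <= u' <= b -> Rabs (u' - u) < delta ->
    dist (gam u) (gam u') <= L * dist (eta u) (eta u').
Hypothesis Lpos : 0 <= L.

Lemma Qp_all t : a <= t <= b -> forall s, t <= s <= b -> Qp t s.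
Proof.
  intros Ht.
  set (E := fun s => t <= s <= b /\ forall s', t <= s' <= s -> Qp t s').
  assert (Qtt : Qp t t).
  { exists 0. split. apply ch_base; auto. rewrite dist_refl; lra. }
  assert (Et : E t).
  { split; [lra|]. intros s' Hs'. replace s' with t by lra. auto. }
  assert (Eb : bound E) by (exists b; intros x [Hx _]; lra).
  destruct (completeness E Eb (ex_intro _ t Et)) as [m [Hub Hlub]].
  assert (Htm : t <= m) by (apply Hub; auto).
  assert (Hmb : m <= b) by (apply Hlub; intros x [Hx _]; lra).
  assert (Hbelow : forall s', t <= s' < m -> Qp t s').
  { intros s' Hs'. destruct (classic (Qp t s')) as [Hq|Hq]; auto. exfalso.
    assert (m <= s'); [|lra]. apply Hlub. intros e [He1 He2].
    destruct (Rle_dec e s'); auto. exfalso; apply Hq; apply He2; lra. }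
  destruct (LC m) as [d [Hd Hdm]]; [lra|].
  assert (Qm : Qp t m).
  { destruct (Req_dec t m) as [E1|E1]. subst m; auto.
    set (u := Rmax t (m - d/2)).
    assert (t <= u < m) by (unfold u; unfold Rmax; destruct Rle_dec; lra).
    apply Qp_extend with u; auto; try lra.
    rewrite (dist_sym (gam u)), (dist_sym (eta u)). apply Hdm; try lra.
    unfold u, Rmax; destruct Rle_dec; rewrite Rabs_left; lra. }
  assert (Em : E m).
  { split; [lra|]. intros s' Hs'. destruct (Req_dec s' m). subst; auto. apply Hbelow; lra. }
  destruct (Req_dec m b) as [Emb|Emb].
  - intros s Hs. subst m. apply Em; auto.
  - exfalso. set (s2 := Rmin b (m + d/2)).
    assert (m < s2 <= b) by (unfold s2, Rmin; destruct Rle_dec; lra).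
    assert (E s2).
    { split; [lra|]. intros s' Hs'. destruct (Rle_dec s' m). apply Em; lra.
      apply Qp_extend with m; auto; try lra. apply Hdm; try lra.
      rewrite Rabs_right; unfold s2, Rmin in *; destruct Rle_dec; lra. }
    assert (s2 <= m) by (apply Hub; auto). lra.
Qed.

Lemma length_transfer M : length_le eta a b M -> length_le gam a b (L * M).
Proof.
  intros HM.
  assert (Hmain : forall ts t, Sorted Rle (t :: ts) -> Forall (fun x => a <= x <= b) (t :: ts) ->
     exists w S, chain w t S /\ poly_sum gam (t :: ts) <= L * S).
  { induction ts as [|u ts IH]; intros t Hs Hf.
    - exists t, 0. inversion Hf; subst. split. apply ch_base; auto. simpl; lra.
    - apply Sorted_inv in Hs as [Hs Hh]. apply HdRel_inv in Hh.
      inversion Hf as [|? ? Ht Hf']; subst. inversion Hf' as [|? ? Hu _]; subst.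
      destruct (IH u Hs Hf') as [w [S [Hc Hp]]].
      destruct (Qp_all t Ht u (conj Hh (proj2 Hu))) as [S1 [Hc1 Hd1]].
      exists w, (S1 + S). split. apply chain_trans with u; auto.
      change (poly_sum gam (t :: u :: ts)) with (dist (gam t) (gam u) + poly_sum gam (u :: ts)).
      lra. }
  intros ts Hs Hf. destruct ts as [|t ts].
  - simpl. assert (0 <= M) by (apply (HM nil); constructor). nra.
  - destruct (Hmain ts t Hs Hf) as [w [S [Hc Hp]]].
    pose proof (chain_le_M M _ _ _ HM Hc). nra.
Qed.
End Chains.

Lemma lip_center n L (G : Rn n -> Prop) f : 1 <= L -> is_open G -> LQ_on L G f ->
  forall x, G x -> exists R, 0 < R /\ subset (ball x R) G /\
    forall z, dist x z < R -> dist (f x) (f z) <= L * dist x z.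
Proof.
  intros HL Go HLQ x Gx. destruct (Go x Gx) as [R [HR HB]].
  exists R; split; auto; split; auto. intros z Hz.
  destruct (Rle_dec (dist (f x) (f z)) (L * dist x z)) as [|Hn]; auto. exfalso.
  apply Rnot_le_lt in Hn.
  pose proof (dist_nonneg x z).
  set (s := Rmin R (dist (f x) (f z) / L)).
  assert (Hs1 : dist x z < s).
  { unfold s, Rmin; destruct Rle_dec; auto. apply Rmult_lt_reg_l with L; [lra|].
    field_simplify; lra. }
  assert (Hs2 : s <= R) by (unfold s; apply Rmin_l).
  assert (Hs3 : L * s <= dist (f x) (f z)).
  { unfold s, Rmin; destruct Rle_dec as [Hq|Hq].
    - apply Rmult_le_compat_l with (r := L) in Hq; [|lra].
      replace (L * (dist (f x) (f z) / L)) with (dist (f x) (f z)) in Hq by (field; lra). lra.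
    - right; field; lra. }
  destruct (HLQ x s ltac:(lra)) as [_ Hup].
  { intros y Hy. apply HB. unfold ball in *; lra. }
  assert (Hi : image f (ball x s) (f z)) by (exists z; split; auto).
  apply Hup in Hi. unfold ball in Hi. lra.
Qed.

Lemma colip_center n L (G : Rn n -> Prop) f : 1 <= L -> is_open G -> discrete_on G f -> LQ_on L G f ->
  forall y, G y -> exists r0, 0 < r0 /\
    forall z, dist y z < r0 -> dist y z <= L * dist (f y) (f z).
Proof.
  intros HL Go Hd HLQ y Gy. destruct (Go y Gy) as [R [HR HB]].
  destruct (Hd y Gy) as [d1 [Hd1 Hdisc]].
  exists (Rmin R d1 / 2). split. { unfold Rmin; destruct Rle_dec; lra. }
  intros z Hz.
  assert (Hm1 : Rmin R d1 <= R) by apply Rmin_l. assert (Hm2 : Rmin R d1 <= d1) by apply Rmin_r.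
  destruct (Rle_dec (dist y z) (L * dist (f y) (f z))) as [|Hn]; auto. exfalso.
  apply Rnot_le_lt in Hn.
  pose proof (dist_nonneg (f y) (f z)).
  set (r := dist y z).
  assert (Hr : 0 < r) by (unfold r; nra).
  destruct (HLQ z r Hr) as [Hlow _].
  { intros w Hw. apply HB. unfold ball in *. pose proof (dist_triangle y z w). unfold r in *. lra. }
  assert (Hb : ball (f z) (r / L) (f y)).
  { unfold ball. rewrite dist_sym. apply Rmult_lt_reg_l with L; [lra|].
    replace (L * (r / L)) with r by (field; lra). unfold r in *. lra. }
  destruct (Hlow _ Hb) as [w [Hw Hfw]]. unfold ball in Hw.
  pose proof (dist_triangle y z w).
  assert (Gw : G w) by (apply HB; unfold ball; unfold r in *; lra).
  assert (w = y) by (apply Hdisc; auto; unfold r in *; lra).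
  subst w. rewrite dist_sym in Hw. unfold r in Hw. lra.
Qed.

Theorem lemma3p1 (n : nat) (L : R) (G : Rn n -> Prop) (f : Rn n -> Rn n) :
  1 <= L -> domain G -> discrete_on G f -> LQ_on L G f -> BLD_on L G f.
Proof.
  intros HL [_ [Go _]] Hd HLQ.
  split; [|split; [|split]].
  - intros x Gx eps Heps.
    destruct (lip_center n L G f HL Go HLQ x Gx) as [R [HR [_ Hl]]].
    exists (Rmin R (eps / L)). split. { unfold Rmin; destruct Rle_dec; auto. apply Rdiv_lt_0_compat; lra. }
    intros y _ Hy. assert (Hy1 : dist x y < R) by (pose proof (Rmin_l R (eps/L)); lra).
    pose proof (Hl y Hy1). assert (Hy2 : dist x y < eps / L) by (pose proof (Rmin_r R (eps/L)); lra).
    apply Rmult_lt_compat_l with (r := L) in Hy2; [|lra].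
    replace (L * (eps / L)) with eps in Hy2 by (field; lra). lra.
  - intros U HU HUG z [y [Uy Hfy]]. subst z.
    destruct (HU y Uy) as [r [Hr HB]].
    exists (r / L). split. apply Rdiv_lt_0_compat; lra.
    intros w Hw. destruct (HLQ y r Hr) as [Hlow _].
    { intros v Hv. apply HUG, HB; auto. }
    destruct (Hlow w Hw) as [v [Hv Hfv]]. exists v; split; auto.
  - auto.
  - intros beta a b [Hab [HG Hcont]]. split.
    + intros M HM. apply (length_transfer n beta (fun t => f (beta t)) a b L); auto; try lra.
      intros u Hu. destruct (colip_center n L G f HL Go Hd HLQ (beta u) (HG u Hu)) as [R [HR Hl]].
      destruct (Hcont u Hu R HR) as [dl [Hdl Hc]].
      exists dl; split; [auto|]. intros u' Hu' Hdu. apply Hl. apply Hc; auto.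
    + intros M HM. apply (length_transfer n (fun t => f (beta t)) beta a b L); auto; try lra.
      intros u Hu. destruct (lip_center n L G f HL Go HLQ (beta u) (HG u Hu)) as [R [HR [_ Hl]]].
      destruct (Hcont u Hu R HR) as [dl [Hdl Hc]].
      exists dl; split; [auto|]. intros u' Hu' Hdu. apply Hl. apply Hc; auto.
Qed.
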